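(* Let ''opt'' denote either ''mV'' or ''mVc'', and suppose the subsampling probabilities are $\pi_i=\pi_i^{opt}=r\frac{h_i^{opt}\wedge M}{\sum_{j=1}^n(h_j^{opt}\wedge M)}$ with $k$ and $M$ defined from $\{h_i^{opt}\}$ as in the context. Index the data points by the increasing order of $h^{opt}$, so that $h^{opt}_{(i)}$ is the $i$-th smallest value and $h^{mV}_{(i)}$ denotes the value of $h^{mV}$ at that same data point. Then the asymptotic MSE of $\tilde\theta$ given $\mathcal{D}_n$, namely $\mathrm{tr}(\tilde\Sigma)$, equals $$\frac{4}{n^2(r-k)}\Big[\sum_{i=1}^{n-k}h^{opt}_{(i)}\Big]\sum_{i=1}^{n-k}\frac{[h^{mV}_{(i)}]^2}{h^{opt}_{(i)}}-\frac{4}{n^2}\sum_{i=1}^{n-k}[h^{mV}_{(i)}]^2.$$ In particular, for opt $=$ mV this minimum value of $\mathrm{tr}(\tilde\Sigma)$ over all admissible probabilities equals $$\frac{4}{n^2(r-k)}\Big[\sum_{i=1}^{n-k}h^{mV}_{(i)}\Big]^2-\frac{4}{n^2}\sum_{i=1}^{n-k}[h^{mV}_{(i)}]^2.$$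
   Context: Physical data $\mathcal{D}_n=\{(x_i,y_i^p)\}_{i=1}^n$; $\hat y^s(x,\theta)$ is a surrogate of a computer model, differentiable in $\theta\in\Theta\subset\mathbb{R}^q$; $\hat\theta=\arg\min_{\theta\in\Theta}\frac1n\sum_i[y_i^p-\hat y^s(x_i,\theta)]^2$; $g_i=\nabla_\theta\hat y^s(x_i,\hat\theta)$; $\tilde J=\frac1n\sum_i\frac{\partial^2[y_i^p-\hat y^s(x_i,\hat\theta)]^2}{\partial\theta\partial\theta^T}$ (assumed invertible). $h_i^{mV}=|y_i^p-\hat y^s(x_i,\hat\theta)|(g_i^T\tilde J^{-2}g_i)^{1/2}$, $h_i^{mVc}=|y_i^p-\hat y^s(x_i,\hat\theta)|(g_i^Tg_i)^{1/2}$. Given $h^{opt}$ (either $h^{mV}$ or $h^{mVc}$) with order statistics $h^{opt}_{(1)}\le\dots\le h^{opt}_{(n)}$, $h^{opt}_{(n+1)}=\infty$, $r\in\{1,\dots,n-1\}$ and $h^{opt}_{(n-r)}>0$: $k=\min\{s:0\le s\le r,(r-s)h^{opt}_{(n-s)}<\sum_{i=1}^{n-s}h^{opt}_{(i)}\}$, $M=\frac{1}{r-k}\sum_{i=1}^{n-k}h^{opt}_{(i)}$. For probabilities $\pi_i\in(0,1]$ with $\sum_i\pi_i=r$: $\tilde V=\frac{4}{n^2}\sum_i\frac{1-\pi_i}{\pi_i}[y_i^p-\hat y^s(x_i,\hat\theta)]^2g_ig_i^T$, $\tilde\Sigma=\tilde J^{-1}\tilde V\tilde J^{-1}$. *)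

(* Defs.v *)
From mathcomp Require Import all_boot all_order all_algebra perm.
From mathcomp Require Import all_classical all_reals all_analysis.
Import Order.TTheory GRing.Theory Num.Theory numFieldNormedType.Exports.
Set Implicit Arguments. Unset Strict Implicit. Unset Printing Implicit Defensive.
Local Open Scope ring_scope.

Definition resid (R : realType) (n q : nat) (X : Type) (x : 'I_n -> X)
  (yp : 'I_n -> R) (ys : X -> 'rV[R]_q -> R) (i : 'I_n) (th : 'rV[R]_q) : R :=
  yp i - ys (x i) th.

Definition loss (R : realType) (n q : nat) (X : Type) (x : 'I_n -> X)
  (yp : 'I_n -> R) (ys : X -> 'rV[R]_q -> R) (th : 'rV[R]_q) : R :=
  n%:R^-1 * \sum_(i < n) (resid x yp ys i th) ^+ 2.

Definition gradient (R : realType) (q : nat) (f : 'rV[R]_q -> R) (th : 'rV[R]_q)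
  : 'cV[R]_q := \col_a derive f th (delta_mx 0 a).

Definition hessian (R : realType) (q : nat) (f : 'rV[R]_q -> R) (th : 'rV[R]_q)
  : 'M[R]_q :=
  \matrix_(a, b) derive (fun t => derive f t (delta_mx 0 b)) th (delta_mx 0 a).

Definition gvec (R : realType) (n q : nat) (X : Type) (x : 'I_n -> X)
  (ys : X -> 'rV[R]_q -> R) (thhat : 'rV[R]_q) (i : 'I_n) : 'cV[R]_q :=
  gradient (ys (x i)) thhat.

Definition Jtil (R : realType) (n q : nat) (X : Type) (x : 'I_n -> X)
  (yp : 'I_n -> R) (ys : X -> 'rV[R]_q -> R) (thhat : 'rV[R]_q) : 'M[R]_q :=
  n%:R^-1 *: \sum_(i < n) hessian (fun th => (resid x yp ys i th) ^+ 2) thhat.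

Definition h_mV (R : realType) (n q : nat) (X : Type) (x : 'I_n -> X)
  (yp : 'I_n -> R) (ys : X -> 'rV[R]_q -> R) (thhat : 'rV[R]_q) (i : 'I_n) : R :=
  let g := gvec x ys thhat i in
  let Ji := invmx (Jtil x yp ys thhat) in
  `|resid x yp ys i thhat| * Num.sqrt ((g^T *m (Ji *m Ji) *m g) 0 0).

Definition h_mVc (R : realType) (n q : nat) (X : Type) (x : 'I_n -> X)
  (yp : 'I_n -> R) (ys : X -> 'rV[R]_q -> R) (thhat : 'rV[R]_q) (i : 'I_n) : R :=
  let g := gvec x ys thhat i in
  `|resid x yp ys i thhat| * Num.sqrt ((g^T *m g) 0 0).

Definition Vtil (R : realType) (n q : nat) (X : Type) (x : 'I_n -> X)
  (yp : 'I_n -> R) (ys : X -> 'rV[R]_q -> R) (thhat : 'rV[R]_q)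
  (pi : 'I_n -> R) : 'M[R]_q :=
  (4 / (n%:R ^+ 2)) *:
    \sum_(i < n) (((1 - pi i) / pi i) * (resid x yp ys i thhat) ^+ 2)
                   *: (gvec x ys thhat i *m (gvec x ys thhat i)^T).

Definition Sigmatil (R : realType) (n q : nat) (X : Type) (x : 'I_n -> X)
  (yp : 'I_n -> R) (ys : X -> 'rV[R]_q -> R) (thhat : 'rV[R]_q)
  (pi : 'I_n -> R) : 'M[R]_q :=
  let Ji := invmx (Jtil x yp ys thhat) in
  Ji *m Vtil x yp ys thhat pi *m Ji.

Definition sorts_incr (R : realType) (n : nat) (h : 'I_n -> R)
  (sigma : {perm 'I_n}) : Prop :=
  forall i j : 'I_n, (i <= j)%N -> h (sigma i) <= h (sigma j).

(* value of f at the data point of rank j (1-indexed, 1 <= j <= n) in the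
   ordering sigma; with f = h and sigma sorting h, ostat h sigma j = h_(j) *)
Definition ostat (R : realType) (n : nat) (f : 'I_n -> R) (sigma : {perm 'I_n})
  (j : nat) : R :=
  nth 0 [seq f (sigma i) | i <- enum 'I_n] j.-1.

Definition kcond (R : realType) (n : nat) (h : 'I_n -> R) (sigma : {perm 'I_n})
  (r s : nat) : Prop :=
  (r - s)%:R * ostat h sigma (n - s) < \sum_(1 <= i < (n - s).+1) ostat h sigma i.

Definition is_k (R : realType) (n : nat) (h : 'I_n -> R) (sigma : {perm 'I_n})
  (r k : nat) : Prop :=
  [/\ (k <= r)%N, kcond h sigma r k & forall s, (s < k)%N -> ~ kcond h sigma r s].

Definition Mval (R : realType) (n : nat) (h : 'I_n -> R) (sigma : {perm 'I_n})
  (r k : nat) : R :=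
  ((r - k)%:R)^-1 * \sum_(1 <= i < (n - k).+1) ostat h sigma i.

Definition pi_opt (R : realType) (n : nat) (h : 'I_n -> R) (M : R) (r : nat)
  (i : 'I_n) : R :=
  r%:R * Num.min (h i) M / \sum_(j < n) Num.min (h j) M.

(* Main.v *)
Require Import Defs.
From mathcomp Require Import all_boot all_order all_algebra perm.
From mathcomp Require Import all_classical all_reals all_analysis.
Import Order.TTheory GRing.Theory Num.Theory numFieldNormedType.Exports.
From mathcomp Require Import ring lra zify.
Local Open Scope ring_scope.


Lemma core (R : realFieldType) (n r k : nat) (s a : nat -> R) :
  (1 <= r)%N -> (r <= n - 1)%N ->
  (forall j, 0 <= s j) ->
  (forall i j, (1 <= i)%N -> (i <= j)%N -> (j <= n)%N -> s i <= s j) ->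
  (forall j, (1 <= j <= n)%N -> s j = 0 -> a j = 0) ->
  0 < s (n - r)%N ->
  (k <= r)%N ->
  (r - k)%:R * s (n - k)%N < \sum_(1 <= i < (n - k).+1) s i ->
  (forall t, (t < k)%N -> ~ ((r - t)%:R * s (n - t)%N < \sum_(1 <= i < (n - t).+1) s i)) ->
  let M := ((r - k)%:R)^-1 * \sum_(1 <= i < (n - k).+1) s i in
  let S := \sum_(1 <= j < n.+1) Num.min (s j) M in
  (k < r)%N /\
  \sum_(1 <= j < n.+1) ((1 - r%:R * Num.min (s j) M / S) / (r%:R * Num.min (s j) M / S)) * a j
  = M * \sum_(1 <= j < (n - k).+1) a j / s j - \sum_(1 <= j < (n - k).+1) a j.
Proof.
move=> r1 rn s0 smon sa spos kr kc kmin M S.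
set P := fun j => \sum_(1 <= i < j.+1) s i.
have PS j : P j.+1 = P j + s j.+1 by rewrite /P big_nat_recr.
have P0 j : 0 <= P j by apply: sumr_ge0 => i _.
have krr : (k < r)%N.
  rewrite ltn_neqAle kr andbT; apply/eqP => ekr.
  apply: (kmin (r - 1)%N); first by lia.
  have -> : (r - (r - 1) = 1)%N by lia.
  have -> : (n - (r - 1) = (n - r).+1)%N by lia.
  rewrite -/(P _) PS mul1r.
  have -> : P (n - r)%N = P (n - r).-1.+1 by congr P; lia.
  rewrite PS -(prednK (_ : (0 < n - r)%N)); last by lia.
  have := P0 (n - r).-1; have := spos. 
  have -> : (n - r).-1.+1 = (n - r)%N by lia.
  lra.
split=> //.
have c0 : 0 < (r - k)%:R :> R by rewrite ltr0n subn_gt0.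
have PM : P (n - k)%N = (r - k)%:R * M by rewrite /M mulrA mulfV ?mulr1 ?mul1r // gt_eqF.
have Mpos : 0 < M.
  have : 0 < P (n - k)%N by have := s0 (n - k)%N; rewrite /P; nra.
  rewrite PM => h; rewrite -(pmulr_rgt0 _ c0) //.
have sM : s (n - k)%N%N < M.
  by rewrite -(ltr_pM2l c0) -PM.
have Ms : forall j, ((n - k).+1 <= j <= n)%N -> M <= s j.
  move=> j /andP[j1 j2].
  have k1 : (0 < k)%N by lia.
  apply: le_trans (smon (n - k).+1 j _ _ _) => //.
  have := kmin (k - 1)%N ltac:(lia).
  have -> : (r - (k - 1) = (r - k).+1)%N by lia.
  have -> : (n - (k - 1) = (n - k).+1)%N by lia.
  rewrite -/(P _) PS PM -natr1 => /negP; rewrite -leNgt => h.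
  rewrite -(ler_pM2l c0); nra.
have kn : (k <= n)%N by lia.
have nk1 : (1 <= (n - k).+1)%N by lia.
have nkn : ((n - k).+1 <= n.+1)%N by lia.
have minL : forall j, (1 <= j < (n - k).+1)%N -> Num.min (s j) M = s j.
  move=> j /andP[j1 j2]; apply: min_l; apply: ltW; apply: le_lt_trans sM.
  by apply: smon => //; lia.
have minR : forall j, ((n - k).+1 <= j < n.+1)%N -> Num.min (s j) M = M.
  by move=> j hj; apply: min_r; apply: Ms.
have SE : S = r%:R * M.
  rewrite /S (big_cat_nat nk1 nkn) /= (eq_big_nat _ _ minL) (eq_big_nat _ _ minR).
  rewrite -/(P _) PM sumr_const_nat.
  have -> : (n.+1 - (n - k).+1 = k)%N by lia.
  rewrite -mulr_natl; have -> : r%:R = (r - k)%:R + k%:R :> R by rewrite -natrD; congr (_%:R); lia.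
  rewrite mulr1 -mulr_natl.
  ring.
have r0 : r%:R != 0 :> R by rewrite pnatr_eq0 -lt0n; lia.
have M0 : M != 0 by rewrite gt_eqF.
rewrite (big_cat_nat nk1 nkn) /=.
rewrite [X in _ + X]big1_seq; last first.
  move=> j /andP[_]; rewrite mem_index_iota => hj.
  have rM : r%:R * M != 0 by rewrite mulf_neq0.
  by rewrite minR // SE !divff // subrr !mul0r.
rewrite addr0 mulr_sumr -sumrB; apply: eq_big_nat => j hj.
rewrite minL // SE.
have jn : (1 <= j <= n)%N by lia.
have [sj|sj0] := eqVneq (s j) 0.
  by rewrite (sa j jn sj) sj !(mulr0, mul0r, subr0).
by field; apply/and3P; split.
Qed.

Lemma shift (R : nmodType) n (G : nat -> R) :
  \sum_(i < n) G i.+1 = \sum_(1 <= i < n.+1) G i.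
Proof. by rewrite -(big_mkord xpredT (fun i => G i.+1)) big_add1. Qed.

Lemma trace_form (R : comRingType) n q (J : 'M[R]_q) c (b : 'I_n -> R) (g : 'I_n -> 'cV[R]_q) :
 \tr (J *m (c *: \sum_i b i *: (g i *m (g i)^T)) *m J)
  = c * \sum_i b i * ((g i)^T *m (J *m J) *m g i) 0 0.
Proof.
rewrite -scalemxAr -scalemxAl mxtraceZ mulmx_sumr mulmx_suml raddf_sum /=.
congr (_ * _); apply: eq_bigr => i _.
rewrite -scalemxAr -scalemxAl mxtraceZ; congr (_ * _).
by rewrite mxtrace_mulC !mulmxA mxtrace_mulC trace_mx11 !mulmxA.
Qed.

Lemma quad_ge0 (R : realFieldType) q (u : 'cV[R]_q) : 0 <= (u^T *m u) 0 0.
Proof. rewrite mxE; apply: sumr_ge0 => j _; rewrite mxE -expr2; exact: sqr_ge0. Qed.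

Lemma quad_eq0 (R : realFieldType) q (u : 'cV[R]_q) : (u^T *m u) 0 0 = 0 -> u = 0.
Proof.
rewrite mxE => h; apply/matrixP => j i; rewrite (ord1 i) [RHS]mxE.
have h2 : forall j0 : 'I_q, true -> 0 <= (u^T) 0 j0 * u j0 0.
  by move=> j0 _; rewrite mxE -expr2 sqr_ge0.
have := psumr_eq0P h2 h (i:=j) isT.
by rewrite mxE => /eqP; rewrite mulf_eq0 orbb => /eqP.
Qed.

Theorem lemma2 (R : realType) (n q : nat) (X : Type) (x : 'I_n -> X)
  (yp : 'I_n -> R) (ys : X -> 'rV[R]_q -> R) (Theta : set 'rV[R]_q)
  (thhat : 'rV[R]_q) :
  (forall i th, Theta th -> differentiable (ys (x i)) th) ->
  Theta thhat ->
  (forall th, Theta th -> loss x yp ys thhat <= loss x yp ys th) ->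
  (Jtil x yp ys thhat)^T = Jtil x yp ys thhat ->
  Jtil x yp ys thhat \in unitmx ->
  forall (r : nat), (1 <= r <= n - 1)%N ->
  forall (hopt : 'I_n -> R),
    hopt = h_mV x yp ys thhat \/ hopt = h_mVc x yp ys thhat ->
  forall (sigma : {perm 'I_n}), sorts_incr hopt sigma ->
  0 < ostat hopt sigma (n - r) ->
  forall (k : nat), is_k hopt sigma r k ->
  let M := Mval hopt sigma r k in
  let trS := \tr (Sigmatil x yp ys thhat (pi_opt hopt M r)) in
  let hV := ostat (h_mV x yp ys thhat) sigma in
  trS = 4 / (n%:R ^+ 2 * (r - k)%:R)
          * (\sum_(1 <= i < (n - k).+1) ostat hopt sigma i)
          * (\sum_(1 <= i < (n - k).+1) (hV i) ^+ 2 / ostat hopt sigma i)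
        - 4 / (n%:R ^+ 2) * \sum_(1 <= i < (n - k).+1) (hV i) ^+ 2
  /\ (hopt = h_mV x yp ys thhat ->
      trS = 4 / (n%:R ^+ 2 * (r - k)%:R)
              * (\sum_(1 <= i < (n - k).+1) hV i) ^+ 2
            - 4 / (n%:R ^+ 2) * \sum_(1 <= i < (n - k).+1) (hV i) ^+ 2).

Proof.
move=> _ _ _ Jsym Junit r /andP[r1 rn] hopt hdef sigma sinc spos k [kr kc kmin] M trS hV.
set Ji := invmx (Jtil x yp ys thhat).
have JiT : Ji^T = Ji by rewrite /Ji trmx_inv Jsym.
have vE : forall i, (gvec x ys thhat i)^T *m (Ji *m Ji) *m gvec x ys thhat i
   = (Ji *m gvec x ys thhat i)^T *m (Ji *m gvec x ys thhat i).
  by move=> i; rewrite trmx_mul JiT !mulmxA.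
have hV2 : forall i, h_mV x yp ys thhat i ^+ 2
   = resid x yp ys i thhat ^+ 2 *
     ((gvec x ys thhat i)^T *m (Ji *m Ji) *m gvec x ys thhat i) 0 0.
  move=> i; rewrite /h_mV /= -/Ji exprMn real_normK ?num_real //.
  congr (_ * _); apply: sqr_sqrtr; rewrite vE; exact: quad_ge0.
have h0 : forall i, 0 <= hopt i.
  by move=> i; case: hdef => ->; rewrite /h_mV /h_mVc /= mulr_ge0 ?normr_ge0 ?sqrtr_ge0.
have hz : forall i, hopt i = 0 -> h_mV x yp ys thhat i = 0.
  move=> i; case: hdef => -> // /eqP; rewrite /h_mVc /= mulf_eq0 => /orP[].
    by rewrite /h_mV /= => /eqP ->; rewrite mul0r.
  rewrite sqrtr_eq0 => hle.
  have g0 : gvec x ys thhat i = 0.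
    by apply: quad_eq0; apply/eqP; rewrite eq_le hle quad_ge0.
  by rewrite /h_mV /= g0 mulmx0 mxE sqrtr0 mulr0.
have ost : forall (f : 'I_n -> R) (i : 'I_n), ostat f sigma i.+1 = f (sigma i).
  by move=> f i; rewrite /ostat /= (nth_map i) ?size_enum_ord // nth_ord_enum.
have ost0 : forall (f : 'I_n -> R), (forall i, 0 <= f i) -> forall j, 0 <= ostat f sigma j.
  move=> f f0 j; rewrite /ostat; case hj : (j.-1 < size [seq f (sigma i) | i <- enum 'I_n])%N.
    by have /mapP[i _ ->] := mem_nth 0 hj.
  by rewrite nth_default // leqNgt hj.
set s := ostat hopt sigma.
set a := fun j => hV j ^+ 2.
have smon : forall i j, (1 <= i)%N -> (i <= j)%N -> (j <= n)%N -> s i <= s j.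
  move=> i j i1 ij jn.
  have hi : (i.-1 < n)%N by lia.
  have hj : (j.-1 < n)%N by lia.
  rewrite /s -(prednK i1) -(prednK (leq_trans i1 ij)) (ost _ (Ordinal hi)) (ost _ (Ordinal hj)).
  apply: sinc => /=; lia.
have sa : forall j, (1 <= j <= n)%N -> s j = 0 -> a j = 0.
  move=> j /andP[j1 jn]; have hj : (j.-1 < n)%N by lia.
  rewrite /a /hV /s -(prednK j1) (ost _ (Ordinal hj)) (ost _ (Ordinal hj)) => /hz ->.
  by rewrite expr0n.
have rn' : (r <= n - 1)%N by [].
have [krr coreE] := @core R n r k s a r1 rn (ost0 _ h0) smon sa spos kr kc kmin.
have trE : trS = 4 / (n%:R ^+ 2) *
   \sum_(1 <= j < n.+1) ((1 - r%:R * Num.min (s j) M / \sum_(1 <= j < n.+1) Num.min (s j) M)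
        / (r%:R * Num.min (s j) M / \sum_(1 <= j < n.+1) Num.min (s j) M)) * a j.
  rewrite /trS /Sigmatil /Vtil /= -/Ji trace_form; congr (_ * _).
  have Sden : \sum_(j < n) Num.min (hopt j) M = \sum_(1 <= j < n.+1) Num.min (s j) M.
    by rewrite (reindex_inj (@perm_inj _ sigma)) /= -shift; apply: eq_bigr => i _; rewrite /s ost.
  rewrite (reindex_inj (@perm_inj _ sigma)) /= -shift; apply: eq_bigr => i _.
  rewrite /pi_opt Sden /a /hV /s !ost hV2 -/Ji; ring.
have rk0 : (r - k)%:R != 0 :> R by rewrite pnatr_eq0 subn_eq0 -ltnNge.
have nn0 : n%:R != 0 :> R by rewrite pnatr_eq0 -lt0n; lia.
have n0 : n%:R ^+ 2 != 0 :> R by rewrite expf_neq0 // pnatr_eq0 -lt0n; lia.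
split.
  rewrite trE coreE /M /Mval -/s /a.
  by field; rewrite nn0 rk0.
move=> hE.
have ha : forall j, (1 <= j < (n - k).+1)%N -> a j / s j = hV j.
  move=> j _; rewrite /a /s /hV hE; have [->|nz] := eqVneq (ostat (h_mV x yp ys thhat) sigma j) 0.
    by rewrite expr0n mul0r.
  by rewrite expr2 mulfK.
rewrite trE coreE (eq_big_nat _ _ ha) /M /Mval -/s /a.
have -> : \sum_(1 <= i < (n - k).+1) s i = \sum_(1 <= i < (n - k).+1) hV i by rewrite /s /hV hE.
by field; rewrite nn0 rk0.
Qed.
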